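(* In a mirror graph $G$, any two distinct convex cycles intersect in the empty set, in a single vertex, or in a single edge.
   Context: A mirror graph is a finite connected simple graph $G$ admitting a partition $\{E_1,\dots,E_k\}$ of its edges such that for every $i$ there is an automorphism $\alpha_i$ swapping the endpoints of every edge of $E_i$, with $G-E_i$ having exactly two components that $\alpha_i$ maps isomorphically onto each other. A cycle is convex if every shortest path of $G$ between two of its vertices lies on it. *)

(* Defs.v *)
From mathcomp Require Import all_boot all_fingroup.
Set Implicit Arguments. Unset Strict Implicit. Unset Printing Implicit Defensive.

Definition simple_graph (T : finType) (e : rel T) : Prop :=
  symmetric e /\ irreflexive e.

Definition connected_graph (T : finType) (e : rel T) : Prop :=
  forall x y : T, connect e x y.

Definition edges (T : finType) (e : rel T) : {set {set T}} :=
  [set s : {set T} | [exists x, exists y, e x y && (s == [set x; y])]].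

(* Graph automorphism (bijective since it is a permutation). *)
Definition is_aut (T : finType) (e : rel T) (a : {perm T}) : Prop :=
  forall x y, e (a x) (a y) = e x y.

Definition del_edges (T : finType) (e : rel T) (F : {set {set T}}) : rel T :=
  fun x y => e x y && ([set x; y] \notin F).

(* The mirror condition for an edge class F with automorphism a:
   a swaps the endpoints of every edge of F, G - F has exactly two
   components C1 (of u) and C2 (of v), and a maps C1 onto C2 and C2 onto C1
   (a being an automorphism of G, the restrictions are isomorphisms). *)
Definition mirror_class (T : finType) (e : rel T) (F : {set {set T}})
    (a : {perm T}) : Prop :=
  is_aut e a /\
  (forall x y, e x y -> [set x; y] \in F -> a x = y /\ a y = x) /\
  exists u v : T,
    ~~ connect (del_edges e F) u v /\
    (forall w, connect (del_edges e F) u w || connect (del_edges e F) v w) /\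
    (forall w, connect (del_edges e F) u w = connect (del_edges e F) v (a w)).

Definition mirror_graph (T : finType) (e : rel T) : Prop :=
  simple_graph e /\ connected_graph e /\
  exists P : {set {set {set T}}},
    partition P (edges e) /\
    forall F, F \in P -> exists a : {perm T}, mirror_class e F a.

Definition is_cycle (T : finType) (e : rel T) (c : seq T) : Prop :=
  3 <= size c /\ uniq c /\ path.cycle e c.

Definition cverts (T : finType) (c : seq T) : {set T} := [set x in c].

Definition cedges (T : finType) (c : seq T) : {set {set T}} :=
  [set [set x; next c x] | x in c].

Fixpoint pedges (T : finType) (x : T) (p : seq T) : {set {set T}} :=
  if p is y :: p' then [set x; y] |: pedges y p' else set0.

Definition shortest_path (T : finType) (e : rel T) (x : T) (p : seq T) (y : T)
  : Prop :=
  path e x p /\ last x p = y /\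
  forall q, path e x q -> last x q = y -> size p <= size q.

Definition convex_cycle (T : finType) (e : rel T) (c : seq T) : Prop :=
  is_cycle e c /\
  forall x y p, x \in c -> y \in c -> shortest_path e x p y ->
    {subset x :: p <= c} /\ pedges x p \subset cedges c.

(* Main.v *)
Require Import Defs.
From mathcomp Require Import all_boot all_fingroup zify.
Set Implicit Arguments. Unset Strict Implicit. Unset Printing Implicit Defensive.

Definition pd (T : finType) (e : rel T) (x y : T) (n : nat) : bool :=
  [exists t : n.-tuple T, path e x t && (last x t == y)].

Lemma pd_ex (T : finType) (e : rel T) x y : exists n, pd e x y n || ~~ connect e x y.
Proof.
case: (boolP (connect e x y)) => [/connectP [p pp lp]|_]; last by exists 0; rewrite orbT.
exists (size p); apply/orP; left; apply/existsP; exists (in_tuple p).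
by rewrite /= pp -lp eqxx.
Qed.

Definition dist (T : finType) (e : rel T) x y := ex_minn (pd_ex e x y).

Lemma dist_le (T : finType) (e : rel T) x y p :
  path e x p -> last x p = y -> dist e x y <= size p.
Proof.
move=> pp lp; rewrite /dist; case: ex_minnP => m _ mm; apply: mm.
apply/orP; left; apply/existsP; exists (in_tuple p); by rewrite /= pp lp eqxx.
Qed.

Lemma dist_path (T : finType) (e : rel T) x y : connected_graph e ->
  exists p, [/\ path e x p, last x p = y & size p = dist e x y].
Proof.
move=> hc; rewrite /dist; case: ex_minnP => m /orP [] Pm _; last by rewrite hc in Pm.
case/existsP: Pm => t /andP [pt /eqP lt]; exists t; by rewrite size_tuple.
Qed.

Lemma dist_sp (T : finType) (e : rel T) x y p :
  path e x p -> last x p = y -> size p = dist e x y -> shortest_path e x p y.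
Proof. move=> pp lp sp; do 2!split => //; move=> q pq lq; rewrite sp; exact: dist_le. Qed.

Lemma dist0 (T : finType) (e : rel T) x y : connected_graph e -> dist e x y = 0 -> x = y.
Proof. move=> hc d0; have [[|a p] [pp lp sp]] := dist_path x y hc => //; by rewrite d0 in sp. Qed.

Lemma dist_sym (T : finType) (e : rel T) x y : symmetric e -> connected_graph e ->
  dist e x y = dist e y x.
Proof.
move=> hs hc.
suff H : forall u v, dist e u v <= dist e v u by apply/eqP; rewrite eqn_leq !H.
move=> u v; have [p [pp lp sp]] := dist_path v u hc; rewrite -sp.
rewrite -(size_belast v p) -size_rev; apply: dist_le.
  rewrite -lp rev_path; move: pp; apply: sub_path => a b; by rewrite hs.
case: p {pp sp} lp => [|a p] /= lp; first by rewrite lp. by rewrite rev_cons last_rcons.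
Qed.

Lemma dist_edge (T : finType) (e : rel T) x y : e x y -> dist e x y <= 1.
Proof. move=> exy; apply: (@dist_le _ _ _ _ [:: y]) => //=; by rewrite exy. Qed.

Lemma dist_tri (T : finType) (e : rel T) p y z : connected_graph e -> e y z ->
  dist e p z <= (dist e p y).+1.
Proof.
move=> hc eyz; have [q [pq lq sq]] := dist_path p y hc; rewrite -sq -(size_rcons q z).
apply: dist_le; by rewrite ?last_rcons // rcons_path pq lq.
Qed.

Lemma path_aut (T : finType) (e : rel T) (a : {perm T}) x p : is_aut e a ->
  path e (a x) (map a p) = path e x p.
Proof. move=> ha; elim: p x => [|b p IH] x //=; by rewrite ha IH. Qed.

Lemma aut_inv (T : finType) (e : rel T) (a : {perm T}) : is_aut e a -> is_aut e a^-1.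
Proof. move=> ha x y; by rewrite -ha !permKV. Qed.

Lemma dist_aut_le (T : finType) (e : rel T) (a : {perm T}) x y : connected_graph e ->
  is_aut e a -> dist e (a x) (a y) <= dist e x y.
Proof.
move=> hc ha; have [p [pp lp sp]] := dist_path x y hc; rewrite -sp -(size_map a).
by apply: dist_le; rewrite ?path_aut // last_map lp.
Qed.

Lemma dist_aut (T : finType) (e : rel T) (a : {perm T}) x y : connected_graph e ->
  is_aut e a -> dist e (a x) (a y) = dist e x y.
Proof.
move=> hc ha; apply/eqP; rewrite eqn_leq dist_aut_le //.
have := dist_aut_le (a x) (a y) hc (aut_inv ha); by rewrite !permK.
Qed.

Lemma split_first (T : eqType) (P : pred T) x g : P x -> ~~ P (last x g) ->
  exists g1 q g2, [/\ g = g1 ++ q :: g2, P (last x g1) & ~~ P q].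
Proof.
elim: g x => [|h g IH] x /=; first by move=> ->.
move=> Px; case: (boolP (P h)) => Ph; last by move=> _; exists [::], h, g.
case/(IH h Ph) => g1 [q [g2 [-> P1 Pq]]]; by exists (h :: g1), q, g2.
Qed.

Lemma mirror_K (T : finType) (e : rel T) F a : symmetric e -> mirror_class e F a ->
  exists K : pred T, (forall q q', e q q' -> [set q; q'] \in F -> K q != K q') /\
                     (forall q q', e q q' -> K q != K q' -> [set q; q'] \in F).
Proof.
move=> hs [ha [hsw [u [v [nuv [cov eqK]]]]]].
have sd : symmetric (del_edges e F) by move=> x y; rewrite /del_edges hs setUC.
have cs := sym_connect_sym sd.
exists (connect (del_edges e F) u); split.
  move=> q q' eqq Fq; have [aq _] := hsw _ _ eqq Fq; rewrite eqK aq.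
  apply/negP => /eqP Hb; move: (cov q'); rewrite -Hb.
  case: (boolP (connect _ v q')) => //= H1 _; apply: (negP nuv).
  have H2 : connect (del_edges e F) u q' by rewrite -Hb.
  by apply: connect_trans H2 _; rewrite cs.
move=> q q' eqq Kne; case: (boolP ([set q; q'] \in F)) => // nF.
exfalso; move/negP: Kne; apply; apply/eqP.
have dq : del_edges e F q q' by rewrite /del_edges eqq nF.
have dq' : del_edges e F q' q by rewrite sd.
by apply/idP/idP => H; apply: connect_trans H _; apply: connect1.
Qed.

Lemma side_lt (T : finType) (e : rel T) (a : {perm T}) (F : {set {set T}}) (K : pred T) :
  connected_graph e -> is_aut e a ->
  (forall x y, e x y -> [set x; y] \in F -> a x = y /\ a y = x) ->
  (forall q q', e q q' -> K q != K q' -> [set q; q'] \in F) ->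
  forall y z p, a z = y -> K p = K y -> K z != K y -> dist e p y < dist e p z.
Proof.
move=> hc ha hsw hK y z p azy Kp Kz.
have [g [pg lg sg]] := dist_path p z hc.
have := @split_first _ (fun q => K q == K y) p g; rewrite /= Kp lg eqxx (negbTE Kz).
case=> // g1 [q [g2 [dg /eqP P1 Pq]]].
move: pg; rewrite dg cat_path /= => /and3P [pg1 eq pg2].
have Kne : K (last p g1) != K q by rewrite P1 eq_sym.
have [_ aq] := hsw _ _ eq (hK _ _ eq Kne).
have : dist e p y <= size (g1 ++ map a g2).
  apply: dist_le; first by rewrite cat_path pg1 -aq path_aut.
  rewrite last_cat -aq last_map; move: lg; by rewrite dg last_cat /= => ->.
move/leq_ltn_trans; apply; by rewrite -sg dg !size_cat size_map /= addnS.
Qed.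

Lemma set2C (T : finType) (x y : T) : [set x; y] = [set y; x].
Proof. by rewrite setUC. Qed.

Lemma cedges_next (T : finType) (c : seq T) u v : uniq c ->
  [set u; v] \in cedges c -> next c u = v \/ next c v = u.
Proof.
move=> uc /imsetP [t tc E].
have hu : u \in [set t; next c t] by rewrite -E set21.
have hv : v \in [set t; next c t] by rewrite -E set22.
have ht : t \in [set u; v] by rewrite E set21.
have hn : next c t \in [set u; v] by rewrite E set22.
case/set2P: hu => Hu; case/set2P: hv => Hv;
  move/set2P: ht => Ht; move/set2P: hn => Hn;
  case: Ht => Ht; case: Hn => Hn; (left; congruence) || (right; congruence).
Qed.

Lemma cedges_mem (T : finType) (c : seq T) E w : E \in cedges c -> w \in E -> w \in c.
Proof. by case/imsetP => t tc -> /set2P [] ->; rewrite ?mem_next. Qed.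

Lemma cedges_rot (T : finType) (c : seq T) i : uniq c -> cedges (rot i c) = cedges c.
Proof.
move=> uc; apply/setP => E; apply/imsetP/imsetP => [] [t tin ->]; exists t;
  by rewrite ?mem_rot ?next_rot // -(mem_rot i).
Qed.

Lemma cedges_rev (T : finType) (c : seq T) : uniq c -> cedges (rev c) = cedges c.
Proof.
move=> uc; apply/setP => E; apply/imsetP/imsetP => [] [t tin ->].
  exists (prev c t); first by rewrite mem_prev -mem_rev.
  by rewrite next_rev // next_prev // set2C.
exists (next c t); first by rewrite mem_rev mem_next.
by rewrite next_rev // prev_next // set2C.
Qed.

Lemma convex_rot (T : finType) (e : rel T) c i : convex_cycle e c -> convex_cycle e (rot i c).
Proof.
move=> [[s3 [uc cc]] cv]; split; first by rewrite /is_cycle size_rot rot_uniq rot_cycle.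
move=> x y p; rewrite !mem_rot cedges_rot // => xc yc sp.
have [H1 H2] := cv x y p xc yc sp; split => // w /H1; by rewrite mem_rot.
Qed.

Lemma convex_rev (T : finType) (e : rel T) c : symmetric e ->
  convex_cycle e c -> convex_cycle e (rev c).
Proof.
move=> hs [[s3 [uc cc]] cv]; split.
  rewrite /is_cycle size_rev rev_uniq rev_cycle; do 2!split => //.
  by move: cc; apply: sub_cycle => a b /=; rewrite hs.
move=> x y p; rewrite !mem_rev cedges_rev // => xc yc sp.
have [H1 H2] := cv x y p xc yc sp; split => // w /H1; by rewrite mem_rev.
Qed.

Lemma key0 (T : finType) (e : rel T) (F : {set {set T}}) (a : {perm T}) y z w s1 :
  symmetric e -> irreflexive e -> connected_graph e ->
  convex_cycle e [:: y, z, w & s1] -> mirror_class e F a -> [set y; z] \in F ->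
  a (prev [:: y, z, w & s1] y) = next [:: y, z, w & s1] (next [:: y, z, w & s1] y).
Proof.
set c := [:: y, z, w & s1].
move=> hs hi hc cvx hm yzF.
have [[_ [uc cc]] cv] := cvx.
have hm' := hm; case: hm' => [ha [hsw _]].
have [K [Ki Kii]] := mirror_K hs hm.
have U := uc; rewrite /c /= !inE !negb_or in U; move: U => /andP [/and3P [nyz nyw nys1] /andP [/andP [nzw nzs1] uws1]].
have U := cc; rewrite /c /= rcons_path in U; move: U => /and3P [eyz ezw /andP [pws1 exy]].
set x := last w s1 in exy *.
have xin : x \in w :: s1 by apply: mem_last.
have nyz' : y != z by [].
have ncz : next c z = w by rewrite /c /next /= eq_sym (negbTE nyz) eqxx.
have ncy : next c y = z by rewrite /c /next /= eqxx.
have pcz : prev c z = y by rewrite -ncy prev_next.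
have pcy : prev c y = x.
  have ny : y \notin [:: z, w & s1] by case/andP: uc.
  rewrite prev_nth /c mem_head memNindex //.
  by rewrite -[size _]/((size [:: y, z, w & s1]).-1) nth_last.
rewrite pcy ncy ncz.
have [ayz azy] := hsw _ _ eyz yzF.
have Kzy : K z != K y by rewrite eq_sym Ki.
have sideY : forall p, K p = K y -> dist e p y < dist e p z.
  by move=> p Kp; apply: (side_lt hc ha hsw Kii azy).
have sideZ : forall p, K p = K z -> dist e p z < dist e p y.
  move=> p Kp; apply: (side_lt hc ha hsw Kii ayz) => //; by rewrite eq_sym.
have Kb : forall p, K p != K y -> K p = K z.
  by move=> p; move: Kzy; case: (K p); case: (K y); case: (K z).
have Kw : K w != K y.
  apply/negP => /eqP /sideY; rewrite ltnNge => /negP; apply.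
  apply: (@leq_trans 1); last by rewrite lt0n; apply/negP => /eqP /dist0 H; rewrite H // eqxx in nyw.
  by apply: dist_edge; rewrite hs.
have Kx : K x = K y.
  apply/eqP; apply/negP => /negP /Kb /sideZ; rewrite ltnNge => /negP; apply.
  apply: (@leq_trans 1); first exact: dist_edge.
  rewrite lt0n; apply/negP => /eqP /dist0 H; move: xin; rewrite H //= inE (negbTE nzw) /=.
  by rewrite (negbTE nzs1).
have := @split_first _ (fun q => K q != K y) w s1; rewrite /= Kw Kx eqxx.
case=> // g1 [y' [g2 [ds1 Kz' /negPn /eqP Ky']]].
set z' := last w g1 in Kz'.
move: pws1; rewrite ds1 cat_path /= => /and3P [_ ez'y' _].
have z'y'F : [set z'; y'] \in F by apply: Kii => //; rewrite Ky'.
have [az'y' ay'z'] := hsw _ _ ez'y' z'y'F.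
have y'in : y' \in w :: s1 by rewrite ds1 !inE mem_cat inE eqxx !orbT.
have z'in : z' \in w :: s1.
  have := mem_last w g1; rewrite -/z' !inE ds1 mem_cat => /orP [] ->; by rewrite ?orbT.
have y'c : y' \in c by rewrite /c in_cons in_cons y'in !orbT.
have z'c : z' \in c by rewrite /c in_cons in_cons z'in !orbT.
have yc : y \in c by rewrite mem_head.
have zc : z \in c by rewrite /c !inE eqxx orbT.
have ny'y : y' != y by apply/negP => /eqP H; move: y'in; rewrite H inE (negbTE nyw) (negbTE nys1).
have [g [pg lg sg]] := dist_path y y' hc.
case: g pg lg sg => [|h gr] pg lg sg; first by move: ny'y; rewrite -lg eqxx.
have spg : shortest_path e y (h :: gr) y' by apply: dist_sp.
have [_ /subsetP pe] := cv _ _ _ yc y'c spg.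
have : [set y; h] \in cedges c by apply: pe; rewrite /= setU11.
case/(cedges_next uc) => [Hh | Hh].
  exfalso; move: pg lg sg; rewrite -Hh ncy /= => /andP [_ pgr] lgr sg.
  have := sideY _ Ky'; rewrite (dist_sym _ _ hs hc) -sg (dist_sym _ _ hs hc).
  rewrite ltnNge => /negP; apply; apply: leqW; exact: dist_le.
have hx : h = x by rewrite -pcy -Hh prev_next.
rewrite hx in pg lg sg spg Hh.
have pag : path e z (map a (x :: gr)) by rewrite -ayz path_aut.
have lag : last z (map a (x :: gr)) = z' by rewrite -ayz last_map lg.
have sag : size (map a (x :: gr)) = dist e z z' by rewrite size_map sg -ayz /z' -ay'z' dist_aut.
have spag := dist_sp pag lag sag.
have [_ /subsetP pe'] := cv _ _ _ zc z'c spag.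
have : [set z; a x] \in cedges c by apply: pe'; rewrite /= setU11.
case/(cedges_next uc) => [Hh' | Hh']; first by rewrite -Hh' ncz.
exfalso; have ax : a x = y by rewrite -pcz -Hh' prev_next.
move: pag lag sag; rewrite /= ax => /andP [_ pgr] lgr sg'.
have := sideZ _ (Kb _ Kz'); rewrite (dist_sym _ _ hs hc) -sg' (dist_sym _ _ hs hc).
rewrite ltnNge => /negP; apply; apply: leqW; apply: dist_le; first exact: pgr.
by [].
Qed.

Lemma key (T : finType) (e : rel T) (c : seq T) (F : {set {set T}}) (a : {perm T}) y :
  symmetric e -> irreflexive e -> connected_graph e ->
  convex_cycle e c -> mirror_class e F a -> y \in c -> [set y; next c y] \in F ->
  a (prev c y) = next c (next c y).
Proof.
move=> hs hi hc cvx hm yc.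
have [[s3 [uc _]] _] := cvx.
case: (rot_to yc) => i s' ds'.
have cv' := convex_rot i cvx; rewrite ds' in cv'.
rewrite -!(next_rot i uc) -(prev_rot i uc) ds'.
move: cv'; case: s' ds' => [|z [|w s1]] ds' cv'.
- by have := size_rot i c; rewrite ds' => H; rewrite -H in s3.
- by have := size_rot i c; rewrite ds' => H; rewrite -H in s3.
move=> F1; apply: (key0 hs hi hc cv' hm); by move: F1; rewrite {1}/next /= eqxx.
Qed.

Lemma edgeF (T : finType) (e : rel T) u v : mirror_graph e -> e u v ->
  exists F a, mirror_class e F a /\ [set u; v] \in F.
Proof.
move=> [_ [_ [P [hpart hP]]]] euv.
have : [set u; v] \in edges e.
  rewrite inE; apply/existsP; exists u; apply/existsP; exists v; by rewrite euv eqxx.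
case/and3P: hpart => /eqP <- _ _ /bigcupP [F FP inF].
have [a ha] := hP F FP; by exists F, a.
Qed.

Lemma ext (T : finType) (e : rel T) c d x y z : mirror_graph e ->
  convex_cycle e c -> convex_cycle e d -> x \in c -> x \in d ->
  next c x = y -> next c y = z -> next d x = y -> next d y = z ->
  forall t, t \in c -> t \in d /\ next d t = next c t.
Proof.
move=> hmg cvc cvd xc xd ncx ncy ndx ndy.
have [[hs hi] [hc _]] := hmg.
have [[_ [uc cc]] _] := cvc; have [[_ [ud cd]] _] := cvd.
have memc : forall k, iter k (next c) x \in c by elim => //= k IH; rewrite mem_next.
have memd : forall k, iter k (next d) x \in d by elim => //= k IH; rewrite mem_next.
have H : forall k, [/\ iter k (next c) x = iter k (next d) x,
                      iter k.+1 (next c) x = iter k.+1 (next d) x &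
                      iter k.+2 (next c) x = iter k.+2 (next d) x].
  elim => [|k [h0 h1 h2]]; first by split => //=; rewrite ?ncx ?ndx ?ncy ?ndy.
  split => //.
  have e12 := next_cycle cc (memc k.+1).
  have [F [a [hm Fin]]] := edgeF hmg e12.
  have k1 := key hs hi hc cvc hm (memc k.+1) Fin.
  have d1 : iter k.+1 (next d) x \in d by apply: memd.
  have Fin' : [set iter k.+1 (next d) x; next d (iter k.+1 (next d) x)] \in F.
    by rewrite -[next d (iter k.+1 (next d) x)]/(iter k.+2 (next d) x) -h2 -h1.
  have k2 := key hs hi hc cvd hm d1 Fin'.
  rewrite -[iter k.+1 (next d) x]/(next d (iter k (next d) x)) prev_next // -h0 in k2.
  rewrite -[iter k.+1 (next c) x]/(next c (iter k (next c) x)) prev_next // in k1.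
  by rewrite /= -h0 -k2 k1.
move=> t tc.
have fx : fconnect (next c) x t by rewrite (fconnect_cycle (cycle_next uc) xc).
have [h0 h1 _] := H (findex (next c) x t).
have ht := iter_findex fx.
split; first by rewrite -ht h0 memd.
rewrite -ht {1}h0; exact: (esym h1).
Qed.

Lemma cedges_sub (T : finType) (c d : seq T) :
  (forall t, t \in c -> t \in d /\ next d t = next c t) -> cedges c \subset cedges d.
Proof.
move=> H; apply/subsetP => E /imsetP [t tc ->]; have [td nd] := H t tc.
by apply/imsetP; exists t; rewrite ?nd.
Qed.

Lemma orient (T : finType) (e : rel T) c x q1 q2 : symmetric e -> convex_cycle e c ->
  [set x; q1] \in cedges c -> [set q1; q2] \in cedges c -> x != q2 ->
  exists c', [/\ convex_cycle e c', cedges c' = cedges c, x \in c',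
                 next c' x = q1 & next c' q1 = q2].
Proof.
move=> hs cv E1 E2 nx; have [[_ [uc _]] _] := cv.
have xc : x \in c by apply: (cedges_mem E1); rewrite set21.
case/(cedges_next uc): E1 => H1; case/(cedges_next uc): E2 => H2.
- by exists c.
- by move/negP: nx; case; rewrite -(prev_next uc x) H1 -H2 prev_next.
- by move/negP: nx; case; rewrite -H1 H2.
exists (rev c); split.
- exact: convex_rev.
- exact: cedges_rev.
- by rewrite mem_rev.
- by rewrite next_rev // -H1 prev_next.
by rewrite next_rev // -H2 prev_next.
Qed.

Lemma two_edges (T : finType) (e : rel T) c1 c2 x q1 q2 : mirror_graph e ->
  convex_cycle e c1 -> convex_cycle e c2 ->
  [set x; q1] \in cedges c1 -> [set q1; q2] \in cedges c1 ->
  [set x; q1] \in cedges c2 -> [set q1; q2] \in cedges c2 -> x != q2 ->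
  cedges c1 = cedges c2.
Proof.
move=> hmg cv1 cv2 a1 b1 a2 b2 nx; have [[hs _] _] := hmg.
have [d1 [cd1 <- xd1 n1 n1']] := orient hs cv1 a1 b1 nx.
have [d2 [cd2 <- xd2 n2 n2']] := orient hs cv2 a2 b2 nx.
apply/eqP; rewrite eqEsubset; apply/andP; split; apply: cedges_sub.
  exact: (ext hmg cd1 cd2 xd1 xd2 n1 n1' n2 n2').
exact: (ext hmg cd2 cd1 xd2 xd1 n2 n2' n1 n1').
Qed.

Theorem mainTheorem11 (T : finType) (e : rel T) (c1 c2 : seq T) :
  mirror_graph e ->
  convex_cycle e c1 -> convex_cycle e c2 ->
  cedges c1 != cedges c2 ->
  (cverts c1 :&: cverts c2 = set0) \/
  (exists x, cverts c1 :&: cverts c2 = [set x] /\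
             cedges c1 :&: cedges c2 = set0) \/
  (exists x y, e x y /\ cverts c1 :&: cverts c2 = [set x; y] /\
               cedges c1 :&: cedges c2 = [set [set x; y]]).
Proof.
move=> hmg cv1 cv2 ne.
have [[hs hi] [hc _]] := hmg.
have [[_ [uc1 cc1]] cvx1] := cv1; have [[_ [uc2 cc2]] cvx2] := cv2.
set S := cverts c1 :&: cverts c2.
have inS : forall w, (w \in S) = (w \in c1) && (w \in c2) by move=> w; rewrite !inE.
have pairs : forall u v, u \in S -> v \in S -> u != v ->
    [/\ e u v, [set u; v] \in cedges c1 & [set u; v] \in cedges c2].
  move=> u v; rewrite !inS => /andP [u1 u2] /andP [v1 v2] nuv.
  have [p [pp lp sp]] := dist_path u v hc.
  have spp := dist_sp pp lp sp.
  have [_ /subsetP P1] := cvx1 _ _ _ u1 v1 spp.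
  have [_ /subsetP P2] := cvx2 _ _ _ u2 v2 spp.
  case: p pp lp sp spp P1 P2 => [|q1 [|q2 r]] pp lp sp spp P1 P2.
  - by move: nuv; rewrite -lp eqxx.
  - move: pp lp => /= /andP [euq _] lq; rewrite -lq; split => //.
      by apply: P1; rewrite /= setU11.
    by apply: P2; rewrite /= setU11.
  exfalso; move: pp lp sp => /= /and3P [_ _ pr] lr sp.
  have nuq : u != q2.
    apply/negP => /eqP Hu; rewrite -Hu in pr lr.
    have := dist_le pr lr; rewrite -sp /=; lia.
  have i1 : [set u; q1] \in pedges u [:: q1, q2 & r] by rewrite /= setU11.
  have i2 : [set q1; q2] \in pedges u [:: q1, q2 & r] by rewrite /= setU1r // setU11.
  move/eqP: ne; apply; exact: (two_edges hmg cv1 cv2 (P1 _ i1) (P1 _ i2) (P2 _ i1) (P2 _ i2) nuq).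
have edgS : forall E, E \in cedges c1 :&: cedges c2 ->
    exists t, [/\ E = [set t; next c1 t], t \in S, next c1 t \in S & t != next c1 t].
  move=> E; rewrite inE => /andP [E1 E2]; case/imsetP: (E1) => t tc1 dE.
  exists t; split => //.
  - by rewrite inS tc1 (cedges_mem E2) // dE set21.
  - by rewrite inS mem_next tc1 (cedges_mem E2) // dE set22.
  by apply/negP => /eqP H; have := next_cycle cc1 tc1; rewrite -H hi.
case: (set_0Vmem S) => [S0 | [x xS]]; first by left.
right; case: (boolP (S \subset [set x])) => sub.
  left; exists x; split; first by apply/eqP; rewrite eqEsubset sub sub1set xS.
  apply/setP => E; rewrite in_set0; apply/negP => /edgS [t [_ tS nS ntn]].
  move/subsetP: sub => sub; move: (sub _ tS) (sub _ nS) ntn; rewrite !inE.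
  by move=> /eqP -> /eqP ->; rewrite eqxx.
right; case/subsetPn: sub => y yS; rewrite inE => nyx.
have nxy : x != y by rewrite eq_sym.
have [exy e1 e2] := pairs _ _ xS yS nxy.
exists x, y; split => //; split.
  apply/eqP; rewrite eqEsubset; apply/andP; split; last first.
    by apply/subsetP => w /set2P [] ->.
  apply/subsetP => w wS; rewrite !inE; apply/negPn/negP; rewrite negb_or => /andP [nwx nwy].
  have [_ f1 f2] := pairs _ _ wS xS nwx.
  move/eqP: ne; apply; exact: (two_edges hmg cv1 cv2 f1 e1 f2 e2 nwy).
apply/setP => E; rewrite in_set1; apply/idP/idP.
  move=> HE; case: (edgS _ HE) => t [-> tS nS ntn].
  have Hs : forall w, w \in S -> w = x \/ w = y.
    move=> w wS; case: (eqVneq w x) => [->|nwx]; first by left.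
    case: (eqVneq w y) => [->|nwy]; first by right.
    exfalso; have [_ f1 f2] := pairs _ _ wS xS nwx.
    move/eqP: ne; apply; exact: (two_edges hmg cv1 cv2 f1 e1 f2 e2 nwy).
  case: (Hs _ tS) => Ht; case: (Hs _ nS) => Hn; rewrite Hn Ht; rewrite Hn Ht in ntn; first (by rewrite eqxx in ntn); first (by rewrite eqxx); first (by rewrite set2C eqxx); by rewrite eqxx in ntn.
by move/eqP => ->; rewrite inE e1 e2.
Qed.
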